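(* In any run of the MT algorithm, if $t_1<t_2$ are two resampling times, then the witness trees satisfy $\hat\tau^{t_1}\neq\hat\tau^{t_2}$.
   Context: Variable-assignment setting: variables $X_1,\dots,X_n$ with finite value sets, independent under product distribution $\Omega$. A bad-event is a finite set $B$ of pairs $(i,j)$ with distinct first coordinates (the event $\bigwedge_{(i,j)\in B}X_i=j$); $\mathcal B$ is a finite set of bad-events. $(i,j)\sim(i',j')$ iff $i=i'$, $j\ne j'$; $z\sim B$ iff some $z'\in B$ has $z\sim z'$; $i\sim B$ iff $(i,j)\in B$ for some $j$. $Y\subseteq\mathcal B$ is orderable to $E$ if $Y=\{E\}$ or $Y=\{B_1,\dots,B_s\}$ (distinct) can be ordered so that each $i$ has $z_i\in E$ with $z_i\sim B_i$ and $z_i\not\sim B_1,\dots,B_{i-1}$. MT algorithm: draw all variables from $\Omega$; while some bad-event is true, choose a true one $B$ and resample all $X_i$, $i\sim B$, from $\Omega$. Witness trees: with execution log $B_1,\dots,B_T$ (the resampled bad-events in order), $\hat\tau^t$ is built by starting with a root labeled $B_t$ and processing $B_{t-1},\dots,B_1$: a bad-event $B'$ is eligible for a node $v$ labeled $B$ whose children have distinct labels $C_1,\dots,C_r$ if $B'\notin\{C_1,\dots,C_r\}$ and $\{C_1,\dots,C_r,B'\}$ is orderable to $B$; if $B_{t'}$ is eligible for some node, it is added as a child of a deepest eligible node (ties broken arbitrarily), otherwise discarded. Trees are compared as rooted labeled trees. *)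

(* Defs.v *)
From HB Require Import structures.
From mathcomp Require Import all_boot.
From Stdlib Require List Permutation.

Set Implicit Arguments.
Unset Strict Implicit.
Unset Printing Implicit Defensive.

Section MT.

Variables (n : nat) (V : finType).

(* A bad-event: a finite set of pairs (i, j), meaning /\_{(i,j) in B} X_i = j. *)
Definition event := {set ('I_n * V)}.

Definition wf_event (B : event) : Prop :=
  forall z z', z \in B -> z' \in B -> z.1 = z'.1 -> z = z'.

Definition zsim (z z' : 'I_n * V) : bool := (z.1 == z'.1) && (z.2 != z'.2).

Definition zsimB (z : 'I_n * V) (B : event) : bool := [exists z', (z' \in B) && zsim z z'].

Definition varsim (i : 'I_n) (B : event) : bool := [exists j : V, (i, j) \in B].

Definition orderable (Y : {set event}) (E : event) : Prop :=
  Y = [set E] \/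
  exists s : seq event,
    [/\ uniq s, Y =i s &
        forall k, k < size s ->
          exists z, [/\ z \in E, zsimB z (nth set0 s k) &
                      forall l, l < k -> ~~ zsimB z (nth set0 s l)]].

Inductive tree : Type := Node of event & seq tree.

Definition label (t : tree) : event := let: Node a _ := t in a.

(* isomorphism of rooted labeled trees (children are unordered) *)
Inductive tiso : tree -> tree -> Prop :=
| tiso_node : forall a cs ds ds',
    Permutation.Permutation ds ds' -> List.Forall2 tiso cs ds' ->
    tiso (Node a cs) (Node a ds).

Fixpoint subtree (t : tree) (p : seq nat) : option tree :=
  match p with
  | [::] => Some t
  | k :: p' => let: Node _ cs := t in
               if k < size cs then subtree (nth t cs k) p' else None
  end.

Fixpoint add_child (t : tree) (p : seq nat) (b : event) : tree :=
  match p with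
  | [::] => let: Node a cs := t in Node a (rcons cs (Node b [::]))
  | k :: p' => let: Node a cs := t in
               Node a (set_nth t cs k (add_child (nth t cs k) p' b))
  end.

Definition eligible (t : tree) (p : seq nat) (b : event) : Prop :=
  exists a cs, [/\ subtree t p = Some (Node a cs),
                   b \notin map label cs &
                   orderable (b |: [set x in map label cs]) a].

(* processing one bad-event: attach it to a deepest eligible node
   (ties broken arbitrarily), or discard it if no node is eligible *)
Definition step (t : tree) (b : event) (t' : tree) : Prop :=
  (exists p, [/\ eligible t p b,
                 (forall q, eligible t q b -> size q <= size p) &
                 t' = add_child t p b])
  \/ ((forall p, ~ eligible t p b) /\ t' = t).

Fixpoint process (t : tree) (bs : seq event) (t' : tree) : Prop :=
  match bs with
  | [::] => t' = t
  | b :: bs' => exists tm, step t b tm /\ process tm bs' t'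
  end.

(* tau is a possible witness tree \hat\tau^t for the log B_1, B_2, ... (log k = B_k):
   root labeled B_t, then process B_{t-1}, ..., B_1 *)
Definition witness_tree (log : nat -> event) (t : nat) (tau : tree) : Prop :=
  process (Node (log t) [::]) [seq log k | k <- rev (iota 1 t.-1)] tau.

(* A run of the MT algorithm with T resamplings:
   sigma 0 = initial assignment, sigma t = assignment after the t-th resampling,
   log t = B_t the bad-event resampled at step t. *)
Definition mt_run (vals : 'I_n -> {set V}) (Bs : {set event})
    (sigma : nat -> 'I_n -> V) (log : nat -> event) (T : nat) : Prop :=
  (forall t, t <= T -> forall i, sigma t i \in vals i) /\
  (forall t, 1 <= t <= T ->
     [/\ log t \in Bs,
         (forall z, z \in log t -> sigma t.-1 z.1 = z.2) &
         (forall i, ~~ varsim i (log t) -> sigma t i = sigma t.-1 i)]).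

End MT.

(* Main.v *)
Require Import Defs.
From mathcomp Require Import all_boot.
From Stdlib Require List Permutation.
Set Implicit Arguments.
Unset Strict Implicit.

Section Pf.
Variables (n : nat) (V : finType).
Local Notation tree := (tree n V).
Local Notation event := (event n V).

Definition tree_ind' (P : tree -> Prop)
  (H : forall a cs, (forall c, List.In c cs -> P c) -> P (Node a cs)) : forall t, P t :=
  fix F t := let: Node a cs := t in H a cs
   ((fix G (l : seq tree) : forall c, List.In c l -> P c :=
      match l with
      | [::] => fun c (h : List.In c [::]) => False_ind _ h
      | c' :: l' => fun c h => match h with
                              | or_introl e => eq_ind c' P (F c') c e
                              | or_intror h' => G l' c h' end
      end) cs).

Definition isbl (b : event) (t : tree) : bool := if t is Node a [::] then a == b else false.
Definition bump m := if m is 0 then 0 else m.+1.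
Fixpoint mbl b (t : tree) : nat := let: Node a cs := t in
  maxn (if cs is [::] then nat_of_bool (a == b) else 0)
       (foldr maxn 0 (map (fun c => bump (mbl b c)) cs)).
Fixpoint rm b (t : tree) (d : nat) : tree := let: Node a cs := t in
  match d with
  | 0 => Node a cs
  | 1 => Node a (filter (fun c => ~~ isbl b c) cs)
  | d'.+1 => Node a (map (fun c => rm b c d') cs)
  end.

Definition tiso_ind' (P : tree -> tree -> Prop)
  (H : forall a cs ds ds', Permutation.Permutation ds ds' ->
        List.Forall2 (fun x y => tiso x y /\ P x y) cs ds' -> P (Node a cs) (Node a ds)) :
  forall t u, tiso t u -> P t u :=
  fix F t u (h : tiso t u) := match h with
  | tiso_node a cs ds ds' hp hf => H a cs ds ds' hp
     ((fix G (l l' : seq tree) (hl : List.Forall2 (@tiso n V) l l') : List.Forall2 (fun x y => tiso x y /\ P x y) l l' :=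
        match hl with
        | List.Forall2_nil => List.Forall2_nil _
        | List.Forall2_cons x y l1 l1' hxy hr => List.Forall2_cons _ _ (conj hxy (F x y hxy)) (G l1 l1' hr)
        end) cs ds' hf)
  end.

Lemma foldr_max_ge (s : seq nat) i : i < size s -> nth 0 s i <= foldr maxn 0 s.
Proof.
elim: s i => [|x s IH] [|i] //= hi; first by rewrite leq_maxl.
by apply: leq_trans (IH i hi) (leq_maxr _ _).
Qed.

Lemma foldr_max_le (s : seq nat) m : (forall i, i < size s -> nth 0 s i <= m) -> foldr maxn 0 s <= m.
Proof.
elim: s => [|x s IH] //= h; rewrite geq_max (h 0 erefl) /=.
by apply: IH => i hi; apply: (h i.+1).
Qed.

Lemma foldr_max_ex (s : seq nat) m : foldr maxn 0 s = m.+1 -> exists2 i, i < size s & nth 0 s i = m.+1.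
Proof.
elim: s => [|x s IH] //.
rewrite [foldr _ _ _]/=.
case: (leqP x (foldr maxn 0 s)) => hx.
  by move=> /IH [i hi e]; exists i.+1.
by move=> e; exists 0.
Qed.

Lemma foldr_max_eq (s : seq nat) m : (forall i, i < size s -> nth 0 s i <= m) ->
  (exists2 i, i < size s & nth 0 s i = m) -> foldr maxn 0 s = m.
Proof.
move=> h [i hi e]; apply/eqP; rewrite eqn_leq foldr_max_le //=.
by rewrite -{1}e foldr_max_ge.
Qed.

Lemma perm_foldr (s s' : seq nat) : Permutation.Permutation s s' -> foldr maxn 0 s = foldr maxn 0 s'.
Proof.
elim=> //= [x l l' _ -> | x y l | l l' l'' _ -> _ ->] //.
by rewrite maxnCA.
Qed.

Lemma perm_map_seq (A B : Type) (f : A -> B) (l l' : seq A) :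
  Permutation.Permutation l l' -> Permutation.Permutation (map f l) (map f l').
Proof.
elim=> /= [|x l1 l1' _ IH|x y l1|l1 l2 l3 _ IH1 _ IH2].
- by constructor.
- by constructor.
- by constructor.
- exact: Permutation.perm_trans IH1 IH2.
Qed.

Lemma perm_filter_seq (A : Type) (p : pred A) (l l' : seq A) :
  Permutation.Permutation l l' -> Permutation.Permutation (filter p l) (filter p l').
Proof.
elim=> /= [|x l1 l1' _ IH|x y l1|l1 l2 l3 _ IH1 _ IH2].
- by constructor.
- by case: (p x) => //; constructor.
- case: (p x); case: (p y) => //; try constructor; exact: Permutation.Permutation_refl.
- exact: Permutation.perm_trans IH1 IH2.
Qed.

Lemma Forall2_map_eq (A B C : Type) (R : A -> B -> Prop) (f : A -> C) (g : B -> C) l l' :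
  List.Forall2 R l l' -> (forall x y, R x y -> f x = g y) -> map f l = map g l'.
Proof. by elim=> //= x y l1 l1' hxy _ IH h; rewrite (h _ _ hxy) IH. Qed.

Lemma Forall2_filter (A B : Type) (R : A -> B -> Prop) (p : pred A) (q : pred B) l l' :
  List.Forall2 R l l' -> (forall x y, R x y -> p x = q y) ->
  List.Forall2 R (filter p l) (filter q l').
Proof.
elim=> //= x y l1 l1' hxy _ IH h; rewrite (h _ _ hxy).
case: (q y); last exact: IH h.
by constructor => //; apply: IH.
Qed.

Lemma Forall2_mapR (A B : Type) (R : B -> B -> Prop) (P : A -> A -> Prop) (f : A -> B) l l' :
  List.Forall2 P l l' -> (forall x y, P x y -> R (f x) (f y)) ->
  List.Forall2 R (map f l) (map f l').
Proof. by elim=> //= x y l1 l1' hxy _ IH h; constructor; [apply: h | apply: IH]. Qed.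

Lemma Forall2_size (A B : Type) (R : A -> B -> Prop) l l' : List.Forall2 R l l' -> size l = size l'.
Proof. by elim=> //= x y l1 l1' _ _ ->. Qed.

Lemma perm_size (A : Type) (l l' : seq A) : Permutation.Permutation l l' -> size l = size l'.
Proof. exact: Permutation.Permutation_length. Qed.

Lemma In_nth (A : Type) (x0 : A) s i : i < size s -> List.In (nth x0 s i) s.
Proof. by elim: s i => [|x s IH] [|i] //= hi; [left|right; apply: IH]. Qed.

Lemma filter_all_nth (A : Type) (x0 : A) (p : pred A) s :
  (forall i, i < size s -> p (nth x0 s i)) -> filter p s = s.
Proof.
elim: s => [|x s IH] //= h; rewrite (h 0 erefl) IH // => i hi; exact: (h i.+1).
Qed.

Lemma map_id_nth (A : Type) (x0 : A) (f : A -> A) s :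
  (forall i, i < size s -> f (nth x0 s i) = nth x0 s i) -> map f s = s.
Proof.
elim: s => [|x s IH] //= h; rewrite (h 0 erefl) IH // => i hi; exact: (h i.+1).
Qed.

Lemma map_set_nth_id (A : Type) (x0 : A) (f : A -> A) s k y :
  k < size s -> f y = nth x0 s k ->
  (forall i, i < size s -> f (nth x0 s i) = nth x0 s i) -> map f (set_nth x0 s k y) = s.
Proof.
move=> hk hy h; apply: (@eq_from_nth _ x0).
  by rewrite size_map size_set_nth (maxn_idPr hk).
rewrite size_map size_set_nth (maxn_idPr hk) => i hi.
rewrite (nth_map x0); last by rewrite size_set_nth (maxn_idPr hk).
rewrite nth_set_nth /=; case: eqP => [->|_] //; exact: h.
Qed.

Lemma foldr_max_rcons (s : seq nat) x : foldr maxn 0 (rcons s x) = maxn (foldr maxn 0 s) x.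
Proof. by elim: s => [|y s IH] /=; rewrite ?max0n ?maxn0 // IH maxnA. Qed.

Lemma bump_le k m : bump k <= m.+1 -> k <= m.
Proof. by case: k. Qed.

Lemma tiso_root (a : event) cs (u : tree) : tiso (Node a cs) u -> exists ds, u = Node a ds /\ size ds = size cs.
Proof.
move=> h; inversion h; subst; exists ds; split => //.
by rewrite (perm_size H1) (Forall2_size H3).
Qed.

Lemma Forall2_fst (A B : Type) (R P : A -> B -> Prop) l l' :
  List.Forall2 (fun x y => R x y /\ P x y) l l' -> List.Forall2 R l l'.
Proof. by elim=> // x y l1 l1' [h _] _ IH; constructor. Qed.

Section B.
Variable b : event.

Lemma isbl_tiso t u : tiso t u -> isbl b t = isbl b u.
Proof.
case: t => a cs /tiso_root [ds [-> hs]].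
by case: cs hs; case: ds.
Qed.

Lemma mblN a (cs : seq tree) : 0 < size cs -> mbl b (Node a cs) = foldr maxn 0 (map (fun c => bump (mbl b c)) cs).
Proof. by case: cs => [|c cs] //= _; rewrite max0n. Qed.

Lemma mbl_tiso t u : tiso t u -> mbl b t = mbl b u.
Proof.
apply: (@tiso_ind' (fun t u => mbl b t = mbl b u)) => a cs ds ds' hp hf /=.
have e1 : map (fun c => bump (mbl b c)) cs = map (fun c => bump (mbl b c)) ds'.
  by apply: (Forall2_map_eq hf) => x y [_ ->].
rewrite e1 (perm_foldr (perm_map_seq _ hp)).
have hs : size cs = size ds by rewrite (perm_size hp) (Forall2_size hf).
by case: cs hs {hf e1}; case: ds {hp}.
Qed.

Lemma rm_tiso t u : tiso t u -> forall d, tiso (rm b t d) (rm b u d).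
Proof.
apply: (@tiso_ind' (fun t u => forall d, tiso (rm b t d) (rm b u d))) => a cs ds ds' hp hf.
case=> [|[|d]] /=.
- apply: tiso_node hp _; exact: Forall2_fst hf.
- apply: tiso_node (perm_filter_seq _ hp) _.
  apply: Forall2_filter; first exact: Forall2_fst hf.
  by move=> x y h; rewrite (isbl_tiso h).
- apply: tiso_node (perm_map_seq _ hp) _.
  by apply: (Forall2_mapR hf) => x y [_ h].
Qed.

Lemma leaf_orderable : orderable (b |: [set x in map (@label n V) [::]]) b.
Proof. by left; apply/setP => x; rewrite !inE orbF. Qed.

Lemma elig_leaf t q : subtree t q = Some (Node b [::]) -> eligible t q b.
Proof. move=> h; exists b, [::]; split => //; exact: leaf_orderable. Qed.

Lemma mbl_child a (cs : seq tree) x0 i : i < size cs -> bump (mbl b (nth x0 cs i)) <= mbl b (Node a cs).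
Proof.
move=> hi /=; apply: leq_trans (leq_maxr _ _).
rewrite -(nth_map x0 0 (fun c => bump (mbl b c))) //.
by apply: foldr_max_ge; rewrite size_map.
Qed.

Lemma mbl_path t m : mbl b t = m.+1 -> exists q, size q = m /\ subtree t q = Some (Node b [::]).
Proof.
elim/tree_ind': t m => a cs IH m.
case: cs IH => [|c cs'] IH.
  rewrite /= maxn0; case: eqP => // -> [<-]; by exists [::].
rewrite mblN // => /foldr_max_ex [i hi].
rewrite size_map in hi.
rewrite (nth_map (Node a (c :: cs'))) //.
case E: (mbl b _) => [|k] //= [<-].
have [q [hq hs]] := IH _ (In_nth _ hi) _ E.
by exists (i :: q); rewrite /= hq hi.
Qed.

Lemma isbl_mbl t : isbl b t -> mbl b t = 1.
Proof. by case: t => x [|c cs] //= /eqP ->; rewrite eqxx. Qed.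

Lemma rm_id t d : 0 < d -> mbl b t <= d -> rm b t d = t.
Proof.
elim/tree_ind': t d => a cs IH [|[|d]] // _ hm /=.
- congr Node; apply: (@filter_all_nth _ (Node a cs) (fun c => ~~ isbl b c)) => i hi /=.
  apply/negP => /isbl_mbl e; have := mbl_child a (Node a cs) hi.
  by rewrite e => /leq_trans /(_ hm).
- congr Node; apply: (@map_id_nth _ (Node a cs) (fun c => rm b c d.+1)) => i hi.
  apply: IH; first exact: In_nth.
    by [].
  by apply: bump_le; apply: leq_trans hm; apply: mbl_child.
Qed.

Lemma add_rm p t x : subtree t p = Some x -> mbl b t <= (size p).+1 ->
  rm b (add_child t p b) (size p).+1 = t.
Proof.
elim: p t x => [|k p IH] [a cs] x /=.
  case=> _ hm; rewrite filter_rcons /= eqxx /=.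
  by have := @rm_id (Node a cs) 1 isT hm; rewrite /= => ->.
case: ifP => hk // hs hm.
congr Node; apply: (@map_set_nth_id _ (Node a cs) (fun c => rm b c (size p).+1)) => //.
  apply: IH hs _; apply: bump_le; apply: leq_trans hm; exact: mbl_child.
move=> i hi; apply: rm_id => //.
apply: bump_le; apply: leq_trans hm; exact: mbl_child.
Qed.

Lemma add_mbl p t x : subtree t p = Some x -> mbl b t <= (size p).+1 ->
  mbl b (add_child t p b) = (size p).+2.
Proof.
elim: p t x => [|k p IH] [a cs] x.
  case=> _ hm; rewrite [add_child _ _ _]/= mblN ?size_rcons // map_rcons foldr_max_rcons /= eqxx /= maxn0.
  apply/maxn_idPr; apply: leq_trans (leqnSn _).
  by apply: leq_trans hm; rewrite /=; apply: leq_maxr.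
rewrite [subtree _ _]/=; case: ifP => hk // hs hm.
rewrite [add_child _ _ _]/=.
have hsz : size (set_nth (Node a cs) cs k (add_child (nth (Node a cs) cs k) p b)) = size cs.
  by rewrite size_set_nth (maxn_idPr hk).
rewrite mblN ?hsz ?(leq_trans _ hk) //.
apply: foldr_max_eq; rewrite size_map hsz.
  move=> i hi; rewrite (nth_map (Node a cs)) ?hsz // nth_set_nth /=.
  case: eqP => [_|_].
    rewrite (IH _ _ hs) //.
    apply: bump_le; apply: leq_trans hm; exact: mbl_child.
  by apply: leq_trans (leqnSn _); apply: leq_trans hm; exact: mbl_child.
exists k => //; rewrite (nth_map (Node a cs)) ?hsz // nth_set_nth /= eqxx.
rewrite (IH _ _ hs) //.
apply: bump_le; apply: leq_trans hm; exact: mbl_child.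
Qed.

Lemma step_bound t p : eligible t p b -> (forall q, eligible t q b -> size q <= size p) ->
  mbl b t <= (size p).+1.
Proof.
move=> _ hmax; case E: (mbl b t) => [|m] //.
have [q [hq hs]] := mbl_path E.
by rewrite ltnS -hq; apply: hmax; apply: elig_leaf.
Qed.

Lemma step_inj t1 t2 u1 u2 : step t1 b u1 -> step t2 b u2 -> tiso u1 u2 -> tiso t1 t2.
Proof.
case=> [[p1 [he1 hm1 ->]] | [hn1 ->]]; case=> [[p2 [he2 hm2 ->]] | [hn2 ->]] hiso.
- have hb1 := step_bound he1 hm1; have hb2 := step_bound he2 hm2.
  case: he1 => [a1 [cs1 [hs1 _ _]]]; case: he2 => [a2 [cs2 [hs2 _ _]]].
  have e := mbl_tiso hiso; rewrite (add_mbl hs1 hb1) (add_mbl hs2 hb2) in e.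
  case: e => e.
  rewrite -(add_rm hs1 hb1) -(add_rm hs2 hb2) -e.
  exact: rm_tiso.
- have hb1 := step_bound he1 hm1.
  case: he1 => [a1 [cs1 [hs1 _ _]]].
  have e := mbl_tiso hiso; rewrite (add_mbl hs1 hb1) in e.
  have [q [_ hq]] := mbl_path (esym e).
  by case: (hn2 q); apply: elig_leaf.
- have hb2 := step_bound he2 hm2.
  case: he2 => [a2 [cs2 [hs2 _ _]]].
  have e := mbl_tiso hiso; rewrite (add_mbl hs2 hb2) in e.
  have [q [_ hq]] := mbl_path e.
  by case: (hn1 q); apply: elig_leaf.
- exact: hiso.
Qed.
End B.

Lemma process_inj S : forall t1 t2 u1 u2 : tree, process t1 S u1 -> process t2 S u2 -> tiso u1 u2 -> tiso t1 t2.
Proof.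
elim: S => [|c S IH] t1 t2 u1 u2 /=; first by move=> -> ->.
move=> [m1 [h1 p1]] [m2 [h2 p2]] hiso.
exact: step_inj h1 h2 (IH _ _ _ _ p1 p2 hiso).
Qed.

Lemma process_cat (t u : tree) s1 s2 : process t (s1 ++ s2) u -> exists m, process t s1 m /\ process m s2 u.
Proof.
elim: s1 t => [|c s1 IH] t /=; first by move=> h; exists t.
move=> [tm [hs hp]]; have [m [h1 h2]] := IH _ hp; exists m; split => //; by exists tm.
Qed.

Lemma add_nonempty (t : tree) p c : 0 < size (let: Node _ ds := add_child t p c in ds).
Proof.
case: p t => [|k p] [a cs] /=; first by rewrite size_rcons.
by rewrite size_set_nth (leq_trans _ (leq_maxl _ _)).
Qed.
End Pf.

From mathcomp Require Import zify.

Theorem proposition2p7 (n : nat) (V : finType) (vals : 'I_n -> {set V})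
    (Bs : {set event n V})
    (hBs : forall B, B \in Bs ->
             wf_event B /\ (forall z, z \in B -> z.2 \in vals z.1))
    (sigma : nat -> 'I_n -> V) (log : nat -> event n V) (T : nat)
    (hrun : mt_run vals Bs sigma log T)
    (t1 t2 : nat) (h1 : 1 <= t1) (h12 : t1 < t2) (h2T : t2 <= T)
    (tau1 tau2 : tree n V)
    (ht1 : witness_tree log t1 tau1) (ht2 : witness_tree log t2 tau2) :
  ~ tiso tau1 tau2.
Proof.
move=> hiso.
have e : rev (iota 1 t2.-1) = rev (iota t1.+1 (t2.-1 - t1)) ++ t1 :: rev (iota 1 t1.-1).
  have e0 : t2.-1 = t1.-1 + (t2.-1 - t1).+1 by lia.
  have e1 : 1 + t1.-1 = t1 by lia.
  by rewrite {1}e0 iotaD rev_cat e1 /= rev_cons cat_rcons.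
move: ht2; rewrite /witness_tree e map_cat => /process_cat [m1 [_ /= [m2 [hst hp2]]]].
have := process_inj ht1 hp2 hiso.
case/tiso_root => ds [em2 hds]; subst m2.
case: ds hds hst hp2 => // _ [[p [_ _ ea]] | [hn em1]] _.
  by have := add_nonempty m1 p (log t1); rewrite -ea.
apply: (hn [::]); rewrite -em1; exact: elig_leaf.
Qed.
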